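(* For $n\ge 5$, any generating set of the semigroup $\mathbf{W}^{\ge 6}_{\mathrm{bf}}(n)$ has at least $(n-2)^{n-3}+(n-3)2^{n-3}-1$ elements.
   Context: Let $Q=\{0,\dots,n-1\}$ and $Q_M=\{1,\dots,n-3\}$. Transformations of $Q$ act on the right, $q(st)=(qs)t$. Let $\mathbf{B}_{\mathrm{bf}}(n)$ be the set of all transformations $t$ of $Q$ with $0\notin Qt$, $(n-1)t=n-1$, $(n-2)t=n-1$, and for all $j\ge1$, either $0t^j=n-1$ or $0t^j\ne qt^j$ for all $0<q<n-1$. Then $\mathbf{W}^{\ge 6}_{\mathrm{bf}}(n)=\{t\in\mathbf{B}_{\mathrm{bf}}(n)\mid 0t\in\{n-2,n-1\}$, or $0t\in Q_M$ and $qt\in\{n-2,n-1\}$ for all $q\in Q_M\}$, a semigroup under composition. *)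

(* Defs.v *)
From mathcomp Require Import all_boot.
Set Implicit Arguments. Unset Strict Implicit. Unset Printing Implicit Defensive.

(* Transformations of Q = {0,...,n-1} = 'I_n, acting on the right:
   q(st) = (qs)t, i.e. st is "first s, then t". *)
Definition transf (n : nat) := {ffun 'I_n -> 'I_n}.

Definition tmul (n : nat) (s t : transf n) : transf n := [ffun q => t (s q)].

Definition tpow (n : nat) (t : transf n) (j : nat) (q : 'I_n) : 'I_n := iter j t q.

Definition in_Bbf (n : nat) (t : transf n) : Prop :=
  (forall q : 'I_n, val (t q) != 0) /\
  (forall q : 'I_n, val q = n.-1 -> val (t q) = n.-1) /\
  (forall q : 'I_n, val q = n.-2 -> val (t q) = n.-1) /\
  (forall j : nat, 1 <= j -> forall q0 : 'I_n, val q0 = 0 ->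
     val (tpow t j q0) = n.-1 \/
     (forall q : 'I_n, 0 < val q < n.-1 -> tpow t j q0 != tpow t j q)).

Definition in_QM (n : nat) (q : 'I_n) : bool := (1 <= val q) && (val q <= n - 3).

Definition in_W6bf (n : nat) (t : transf n) : Prop :=
  in_Bbf t /\
  (forall q0 : 'I_n, val q0 = 0 ->
     (val (t q0) = n.-2 \/ val (t q0) = n.-1) \/
     (in_QM (t q0) /\
      forall q : 'I_n, in_QM q -> val (t q) = n.-2 \/ val (t q) = n.-1)).

Inductive gen_sg (n : nat) (G : {set transf n}) : transf n -> Prop :=
  | gen_base t : t \in G -> gen_sg G t
  | gen_mul s t : gen_sg G s -> gen_sg G t -> gen_sg G (tmul s t).

Definition generates_W6bf (n : nat) (G : {set transf n}) : Prop :=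
  (forall t, t \in G -> in_W6bf t) /\ (forall t, in_W6bf t -> gen_sg G t).

(* Main.v *)
Require Import Defs.
From mathcomp Require Import all_boot.
From mathcomp Require Import zify.
Set Implicit Arguments. Unset Strict Implicit.
Ltac slia := simpl in *; lia.


Lemma QME m (q : 'I_m.+4.+1) : in_QM q = (0 < val q <= m.+2).
Proof. by rewrite /in_QM. Qed.

Definition Pinv m (t : transf m.+4.+1) : Prop :=
 (forall q, val (t q) != 0) /\ (forall q, val q = m.+4 -> val (t q) = m.+4) /\
 (forall q, val q = m.+3 -> val (t q) = m.+4) /\
 (forall q0 : 'I_m.+4.+1, val q0 = 0 -> in_QM (t q0) -> forall q, in_QM q -> val (t q) = m.+3 \/ val (t q) = m.+4) /\
 (forall q0 : 'I_m.+4.+1, val q0 = 0 -> val (t q0) = m.+3 -> forall q, in_QM q -> val (t q) <> m.+3).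

Lemma W_P m (t : transf m.+4.+1) : in_W6bf t -> Pinv t.
Proof.
move=> [[Hnz [H1 [H2 Hj]]] Hw]; split; first exact: Hnz.
split; first exact: H1. split; first exact: H2. split.
  move=> q0 h0 hq q hq'; have [[e|e]|[_ H]] := Hw q0 h0.
  - by move: hq; rewrite QME e; lia.
  - by move: hq; rewrite QME e; lia.
  - exact: H.
move=> q0 h0 e q hq eq; have [e'|H] := Hj 1 isT q0 h0.
  by move: e'; rewrite /tpow /= e; lia.
have := H q; rewrite QME in hq.
have -> : 0 < val q < (m.+4.+1).-1 by lia.
move=> /(_ isT) /eqP; apply; apply: val_inj; rewrite /tpow /= e eq //.
Qed.

Lemma trich m (a : 'I_m.+4.+1) : [\/ val a = 0, in_QM a, val a = m.+3 | val a = m.+4].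
Proof.
rewrite QME; have : val a < m.+4.+1 := ltn_ord a.
case: (boolP (0 < val a <= m.+2)) => h1 h2; first by constructor 2.
have : val a = 0 \/ val a = m.+3 \/ val a = m.+4 by lia.
by move=> [e|[e|e]]; [constructor 1|constructor 3|constructor 4].
Qed.

Lemma P_mul m (s u : transf m.+4.+1) : Pinv s -> Pinv u -> Pinv (tmul s u).
Proof.
move=> [sa [sb [sc [sd se]]]] [ua [ub [uc [ud ue]]]].
rewrite /Pinv /tmul; split; first by move=> q; rewrite ffunE.
split; first by move=> q h; rewrite ffunE; apply: ub; apply: sb.
split; first by move=> q h; rewrite ffunE; apply: ub; apply: sc.
split.
  move=> q0 h0; rewrite !ffunE => hq q hq'; rewrite ffunE.
  have [e|h|e|e] := trich (s q0).
  - by move: (sa q0); rewrite e.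
  - have [e|e] := sd q0 h0 h q hq'; right; [exact: uc|exact: ub].
  - by move: hq; rewrite QME (uc _ e); lia.
  - by move: hq; rewrite QME (ub _ e); lia.
move=> q0 h0; rewrite !ffunE => hq q hq'; rewrite ffunE.
have [e|h|e|e] := trich (s q0).
- by move: (sa q0); rewrite e.
- have [e|e] := sd q0 h0 h q hq'; [rewrite (uc _ e)|rewrite (ub _ e)]; lia.
- by move: hq; rewrite (uc _ e); lia.
- by move: hq; rewrite (ub _ e); lia.
Qed.

Lemma irred m (s u : transf m.+4.+1) : Pinv s -> Pinv u ->
  forall q0 : 'I_m.+4.+1, val q0 = 0 -> (in_QM (u (s q0)) \/ val (u (s q0)) = m.+3) ->
  forall q, in_QM q -> val (u (s q)) = m.+4.
Proof.
move=> [sa [sb [sc [sd se]]]] [ua [ub [uc [ud ue]]]] q0 h0 hq q hq'.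
have [e|h|e|e] := trich (s q0).
- by move: (sa q0); rewrite e.
- by have [e|e] := sd q0 h0 h q hq'; [apply: uc|apply: ub].
- by move: hq; rewrite QME (uc _ e); lia.
- by move: hq; rewrite QME (ub _ e); lia.
Qed.

Lemma gen_P m (G : {set transf m.+4.+1}) : (forall t, t \in G -> in_W6bf t) ->
  forall t, gen_sg G t -> Pinv t.
Proof.
move=> HG t; elim=> [{}t /HG /W_P //|s u _ Hs _ Hu]; exact: P_mul.
Qed.

Lemma irr_inG m (G : {set transf m.+4.+1}) : (forall t, t \in G -> in_W6bf t) ->
  forall t, gen_sg G t ->
  (forall q0 : 'I_m.+4.+1, val q0 = 0 -> in_QM (t q0) \/ val (t q0) = m.+3) ->
  (exists q, in_QM q /\ val (t q) <> m.+4) -> t \in G.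
Proof.
move=> HG t g; case: g => [//| s u gs gu] H0 [q [hq hq']].
have := irred (gen_P HG gs) (gen_P HG gu) (q0 := inord 0).
rewrite /tmul in H0 hq'; rewrite ffunE in hq'.
have h0 : val (inord 0 : 'I_m.+4.+1) = 0 by exact: inordK.
move=> /(_ h0); have := H0 _ h0; rewrite ffunE => H /(_ H q hq) //.
Qed.


Lemma vinord m k : k < m.+4.+1 -> val (inord k : 'I_m.+4.+1) = k.
Proof. exact: inordK. Qed.

Definition Cxb m (x : 'I_m.+4.+1) (t : transf m.+4.+1) : bool :=
  [forall q0 : 'I_m.+4.+1, (val q0 == 0) ==> (val (t q0) == m.+4)] &&
  [forall y : 'I_m.+4.+1, ((0 < val y <= m.+3) && (y != x)) ==>
      [exists q, in_QM q && (t q == y)]].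

Lemma Cx_mul m (x : 'I_m.+4.+1) (s u : transf m.+4.+1) : in_QM x -> Pinv s -> Pinv u ->
  Cxb x (tmul s u) -> Cxb x u.
Proof.
move=> hx [sa [sb [sc [sd se]]]] [ua [ub [uc [ud ue]]]] /andP[/forallP H0 /forallP Hc].
(* for y covered, preimage under s lies in QM *)
have cov : forall y : 'I_m.+4.+1, 0 < val y <= m.+3 -> y != x ->
    exists q, in_QM q /\ u q = y.
  move=> y hy hyx; have /existsP[q /andP[hq /eqP]] := implyP (Hc y) (introT andP (conj hy hyx)).
  rewrite /tmul ffunE => e; exists (s q); split => //.
  have [e'|//|e'|e'] := trich (s q).
  - by move: (sa q); rewrite e'.
  - by move: hy; rewrite -e (uc _ e'); lia.
  - by move: hy; rewrite -e (ub _ e'); lia.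
apply/andP; split; last first.
  apply/forallP=> y; apply/implyP=> /andP[hy hyx].
  by have [q [hq e]] := cov y hy hyx; apply/existsP; exists q; rewrite hq e eqxx.
apply/forallP=> q0; apply/implyP=> /eqP h0; apply/eqP.
have [e|h|e|//] := trich (u q0).
- by move: (ua q0); rewrite e.
-
  pose y : 'I_m.+4.+1 := inord (if val x == 1 then 2 else 1).
  have hy : val y = (if val x == 1 then 2 else 1) by rewrite vinord //; case: ifP.
  have hyx : y != x by apply/eqP => e1; move: hy; rewrite e1; case: eqP => ?; lia.
  have [q [hq e1]] := cov y ltac:(rewrite hy; case: ifP => _ //) hyx.
  have [e'|e'] := ud q0 h0 h q hq; move: hy; rewrite -e1 e'; case: ifP => _; lia.
- pose y : 'I_m.+4.+1 := inord m.+3.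
  have hy : val y = m.+3 by rewrite vinord.
  have hyx : y != x by apply/eqP => e1; move: hx; rewrite QME -e1 hy; lia.
  have [q [hq e']] := cov y ltac:(rewrite hy; lia) hyx.
  by have := ue q0 h0 e q hq; rewrite e' hy.
Qed.

Lemma Cx_gen m (G : {set transf m.+4.+1}) (x : 'I_m.+4.+1) :
  (forall t, t \in G -> in_W6bf t) -> in_QM x ->
  forall t, gen_sg G t -> Cxb x t -> exists t', t' \in G /\ Cxb x t'.
Proof.
move=> HG hx t; elim=> [{}t tG C|s u gs _ gu IH C]; first by exists t.
apply: IH; exact: Cx_mul hx (gen_P HG gs) (gen_P HG gu) C.
Qed.

Lemma Cx_uniq m (x y : 'I_m.+4.+1) (t : transf m.+4.+1) : in_QM x -> in_QM y ->
  Cxb x t -> Cxb y t -> x = y.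
Proof.
move=> hx hy /andP[_ /forallP Hx] /andP[_ /forallP Hy].
apply/eqP; apply/negPn/negP => nxy.
pose Q := [set q : 'I_m.+4.+1 | in_QM q].
pose T := [set z : 'I_m.+4.+1 | 0 < val z <= m.+3].
have sub : T \subset t @: Q.
  apply/subsetP => z; rewrite inE => hz.
  have [/eqP ezx|nzx] := boolP (z == x).
    have nzy : z != y by rewrite ezx.
    have /existsP[q /andP[hq /eqP e]] := implyP (Hy z) (introT andP (conj hz nzy)).
    by apply/imsetP; exists q; rewrite ?inE.
  have /existsP[q /andP[hq /eqP e]] := implyP (Hx z) (introT andP (conj hz nzx)).
  by apply/imsetP; exists q; rewrite ?inE.
pose y0 : 'I_m.+4.+1 := inord m.+3.
have hy0 : val y0 = m.+3 by rewrite vinord.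
have eT : T = y0 |: Q.
  apply/setP => z; rewrite !inE QME.
  have -> : (z == y0) = (val z == m.+3) by apply/eqP/eqP => [->|e1] //; apply: val_inj; rewrite e1 hy0.
  by case: z => k hk /=; apply/idP/idP => ?; lia.
have := subset_leq_card sub; have := leq_imset_card t Q.
rewrite eT cardsU1 inE QME hy0 /=.
lia.
Qed.

Definition wit m (x : 'I_m.+4.+1) : transf m.+4.+1 :=
  [ffun q : 'I_m.+4.+1 => inord (if val q == 0 then m.+4 else if val q <= m.+2 then
                                    (if q == x then m.+3 else val q) else m.+4)].

Lemma witE m (x q : 'I_m.+4.+1) : val (wit x q) =
  (if val q == 0 then m.+4 else if val q <= m.+2 then (if q == x then m.+3 else val q) else m.+4).
Proof.
rewrite ffunE vinord //; have : val q < m.+4.+1 := ltn_ord q.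
by case: eqP => _; [lia|case: ifP => _; [case: eqP => _|]; lia].
Qed.

Lemma iter_last m (t : transf m.+4.+1) : (forall q, val q = m.+4 -> val (t q) = m.+4) ->
  forall j a, val a = m.+4 -> val (iter j t a) = m.+4.
Proof. by move=> H; elim=> [//|j IH] a ha /=; apply: H; apply: IH. Qed.

Lemma wit_W m (x : 'I_m.+4.+1) : in_QM x -> in_W6bf (wit x).
Proof.
rewrite QME => hx.
have H1 : forall q : 'I_m.+4.+1, val q = m.+4 -> val (wit x q) = m.+4.
  by move=> q e; rewrite witE e /=; case: ifP => // ?; lia.
split; last by move=> q0 h0; left; right; rewrite witE h0.
split; first by move=> q; rewrite witE; case: (val q =P 0) => h0 //; case: ifP => _ //; case: (q =P x) => _ //; apply/eqP.
split; first exact: H1.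
split; first by move=> q e; rewrite witE e /=; case: ifP => // ?; lia.
move=> [//|j] _ q0 h0; left; rewrite /tpow iterSr.
by apply: iter_last => //; rewrite witE h0.
Qed.

Lemma wit_C m (x : 'I_m.+4.+1) : in_QM x -> Cxb x (wit x).
Proof.
rewrite QME => hx; apply/andP; split.
  by apply/forallP => q0; apply/implyP => /eqP h0; rewrite witE h0.
apply/forallP => y; apply/implyP => /andP[hy hyx].
have [e|ne] := eqVneq (val y) m.+3.
  apply/existsP; exists x; rewrite QME hx /=; apply/eqP/val_inj.
  rewrite witE eqxx e; case: eqP => [?|_]; [lia|rewrite ifT //; lia].
apply/existsP; exists y; rewrite QME.
have -> : 0 < val y <= m.+2 by simpl in *; lia.
apply/eqP/val_inj; rewrite witE (negbTE hyx).
case: eqP => [?|_]; [simpl in *; lia|]; rewrite ifT //; simpl in *; lia.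
Qed.


Definition f1 m (c : {ffun 'I_m.+2 -> 'I_m.+3}) (k : nat) : nat :=
  if k == 0 then m.+3 else if k <= m.+2 then
    (if val (c (inord k.-1)) < m.+2 then (val (c (inord k.-1))).+1 else m.+4) else m.+4.
Definition T1 m (c : {ffun 'I_m.+2 -> 'I_m.+3}) : transf m.+4.+1 :=
  [ffun q : 'I_m.+4.+1 => inord (f1 c (val q))].

Lemma T1E m c (q : 'I_m.+4.+1) : val (T1 c q) = f1 c (val q).
Proof.
rewrite ffunE vinord // /f1; case: eqP => _ //; case: ifP => _ //; case: ifP => ? //; lia.
Qed.

Definition f2 m (p : 'I_m.+2) (b : {ffun 'I_m.+2 -> bool}) (k : nat) : nat :=
  if k == 0 then (val p).+1 else if k <= m.+2 then (if b (inord k.-1) then m.+3 else m.+4) else m.+4.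
Definition T2 m p b : transf m.+4.+1 := [ffun q : 'I_m.+4.+1 => inord (@f2 m p b (val q))].

Lemma T2E m p b (q : 'I_m.+4.+1) : val (@T2 m p b q) = f2 p b (val q).
Proof.
rewrite ffunE vinord // /f2; have : val p < m.+2 := ltn_ord p.
case: eqP => _; first lia. case: ifP => _ //; case: ifP => ? //.
Qed.

Lemma T1_W m c : in_W6bf (@T1 m c).
Proof.
have H1 : forall q : 'I_m.+4.+1, val q = m.+4 -> val (T1 c q) = m.+4.
  by move=> q e; rewrite T1E e /f1 /=; case: ifP => // ?; slia.
split; last by move=> q0 h0; left; left; rewrite T1E h0.
split; first by move=> q; rewrite T1E /f1; case: (val q =P 0) => _ //; case: ifP => _ //; case: ifP.
split; first exact: H1.
split; first by move=> q e; rewrite T1E e /f1 /=; case: ifP => // ?; slia.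
move=> [//|[|j]] _ q0 h0.
  right => q hq; apply/eqP => /(congr1 val); rewrite /tpow /= !T1E h0 /f1 /=.
  by repeat (case: ifP => ?); slia.
left; rewrite /tpow !iterSr; apply: iter_last => //.
rewrite T1E T1E h0 /f1 /=; case: ifP => // ?; slia.
Qed.

Lemma T2_W m p b : in_W6bf (@T2 m p b).
Proof.
have hp : val p < m.+2 := ltn_ord p.
have H1 : forall q : 'I_m.+4.+1, val q = m.+4 -> val (T2 p b q) = m.+4.
  by move=> q e; rewrite T2E e /f2 /=; case: ifP => // ?; slia.
have H2 : forall q : 'I_m.+4.+1, val q != 0 -> val (T2 p b (T2 p b q)) = m.+4.
  move=> q hq; rewrite !T2E.
  have f2big : forall k, m.+2 < k -> f2 p b k = m.+4.
    by move=> k hk; rewrite /f2; case: eqP => ?; [slia|rewrite ifF //; slia].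
  have : f2 p b (val q) = m.+3 \/ f2 p b (val q) = m.+4.
    by rewrite /f2 (negbTE hq); case: ifP => _; [case: ifP => _; [left|right]|right].
  by case=> ->; rewrite f2big.
split; last first.
  move=> q0 h0; right; rewrite QME T2E h0 /f2 /=; split; first slia.
  move=> q; rewrite QME => hq; rewrite T2E /f2.
  have -> : (val q == 0) = false by slia.
  rewrite ifT; last slia. by case: ifP; [left|right].
split; first by move=> q; rewrite T2E /f2; case: (val q =P 0) => _ //; case: ifP => _ //; case: ifP.
split; first exact: H1.
split; first by move=> q e; rewrite T2E e /f2 /=; case: ifP => // ?; slia.
move=> [//|[|[|j]]] _ q0 h0.
- right => q hq; apply/eqP => /(congr1 val); rewrite /tpow /= !T2E h0 /f2 /=.
  by repeat (case: ifP => ?); slia.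
- rewrite /tpow /=.
  have [e|ne] := eqVneq (val (T2 p b (T2 p b q0))) m.+4; first by left.
  right => q hq; apply/eqP => /(congr1 val).
  rewrite (H2 q); last by slia.
  move=> e; move: ne; rewrite e eqxx //.
- left; rewrite /tpow !iterSr; apply: iter_last => //.
  apply: H2; rewrite T2E h0 /f2 /=; done.
Qed.


Definition xi m (p : 'I_m.+2) : 'I_m.+4.+1 := inord (val p).+1.
Lemma xiE m (p : 'I_m.+2) : val (xi p) = (val p).+1.
Proof. rewrite vinord //; have : val p < m.+2 := ltn_ord p; lia. Qed.
Lemma xiQ m (p : 'I_m.+2) : in_QM (xi p).
Proof. rewrite QME xiE; have : val p < m.+2 := ltn_ord p; lia. Qed.

Definition g3 m (G : {set transf m.+4.+1}) (p : 'I_m.+2) : transf m.+4.+1 :=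
  if [pick t in G | Cxb (xi p) t] is Some t then t else wit (xi p).

Lemma g3P m (G : {set transf m.+4.+1}) : generates_W6bf G ->
  forall p, g3 G p \in G /\ Cxb (xi p) (g3 G p).
Proof.
move=> [HG Hgen] p; rewrite /g3; case: pickP => [t /andP[tG C] //|none].
exfalso; have [t' [t'G C']] := Cx_gen HG (xiQ p) (Hgen _ (wit_W (xiQ p))) (wit_C (xiQ p)).
by move: (none t'); rewrite t'G C'.
Qed.

Definition D m := ({ffun 'I_m.+2 -> 'I_m.+3} + ('I_m.+2 * {ffun 'I_m.+2 -> bool}))%type.

Definition F m (G : {set transf m.+4.+1}) (d : D m) : transf m.+4.+1 :=
  match d with
  | inl c => T1 c
  | inr (p, b) => if b == [ffun=> false] then g3 G p else T2 p b
  end.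

Definition z0 m : 'I_m.+4.+1 := inord 0.
Lemma z0E m : val (z0 m) = 0. Proof. exact: vinord. Qed.

Lemma g30 m (G : {set transf m.+4.+1}) : generates_W6bf G ->
  forall p, val (g3 G p (z0 m)) = m.+4.
Proof.
move=> HG p; have [_ /andP[/forallP H _]] := g3P HG p.
by move: (H (z0 m)); rewrite z0E eqxx /= => /eqP.
Qed.


Lemma T1_at m (c : {ffun 'I_m.+2 -> 'I_m.+3}) (i : 'I_m.+2) :
  val (T1 c (inord (val i).+1)) = if val (c i) < m.+2 then (val (c i)).+1 else m.+4.
Proof.
have hi : val i < m.+2 := ltn_ord i.
rewrite T1E vinord; last slia.
rewrite /f1 /= ifT; last slia.
by rewrite inord_val.
Qed.

Lemma T2_at m p (b : {ffun 'I_m.+2 -> bool}) (i : 'I_m.+2) :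
  val (@T2 m p b (inord (val i).+1)) = if b i then m.+3 else m.+4.
Proof.
have hi : val i < m.+2 := ltn_ord i.
rewrite T2E vinord; last slia.
rewrite /f2 /= ifT; last slia.
by rewrite inord_val.
Qed.

Lemma T1_0 m c : val (@T1 m c (z0 m)) = m.+3.
Proof. by rewrite T1E z0E. Qed.
Lemma T2_0 m p b : val (@T2 m p b (z0 m)) = (val p).+1.
Proof. by rewrite T2E z0E. Qed.

Lemma F_inj m (G : {set transf m.+4.+1}) : generates_W6bf G -> injective (F G).
Proof.
move=> HG [c|[p b]] [c'|[p' b']] /=.
- move=> e; congr inl; apply/ffunP => i; apply: val_inj.
  have := congr1 (fun t : transf m.+4.+1 => val (t (inord (val i).+1))) e; rewrite /= !T1_at.
  have h1 : val (c i) < m.+3 := ltn_ord _. have h2 : val (c' i) < m.+3 := ltn_ord _.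
  by case: ifP => ?; case: ifP => ?; slia.
- have hp : val p' < m.+2 := ltn_ord _.
  case: eqP => _ e; have := congr1 (fun t : transf m.+4.+1 => val (t (z0 m))) e;
  rewrite /= T1_0 ?g30 ?T2_0 //; slia.
- have hp : val p < m.+2 := ltn_ord _.
  case: eqP => _ e; have := congr1 (fun t : transf m.+4.+1 => val (t (z0 m))) e;
  rewrite /= T1_0 ?g30 ?T2_0 //; slia.
- have hp : val p < m.+2 := ltn_ord _. have hp' : val p' < m.+2 := ltn_ord _.
  case: eqP => eb; case: eqP => eb' e; have e0 := congr1 (fun t : transf m.+4.+1 => val (t (z0 m))) e;
    move: e0; rewrite /= ?g30 ?T2_0 //; try slia.
  + move=> _; rewrite eb eb'; congr (inr (_, _)).
    have [_ C1] := g3P HG p; have [_ C2] := g3P HG p'.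
    rewrite e in C1; have := Cx_uniq (xiQ p) (xiQ p') C1 C2.
    by move/(congr1 val); rewrite !xiE => -[] /val_inj.
  + move=> [] /val_inj ep; subst p'; congr (inr (_, _)).
    apply/ffunP => i; have := congr1 (fun t : transf m.+4.+1 => val (t (inord (val i).+1))) e.
    rewrite (T2_at p b i) (T2_at p b' i); case: (b i); case: (b' i) => // h; exfalso; lia.
Qed.


Definition c1 m : {ffun 'I_m.+2 -> 'I_m.+3} := [ffun=> ord_max].

Lemma F_sub m (G : {set transf m.+4.+1}) : generates_W6bf G ->
  forall d, F G d \in T1 (c1 m) |: G.
Proof.
move=> HG; have [HW Hgen] := HG; case=> [c|[p b]] /=.
- have [->|nc] := eqVneq c (c1 m); first by rewrite setU11.
  rewrite setU1r //; apply: irr_inG HW _ (Hgen _ (T1_W c)) _ _.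
    by move=> q0 h0; right; rewrite T1E h0.
  have [i ci] : exists i, c i != ord_max.
    case: (pickP (fun i => c i != ord_max)) => [i ci|H]; first by exists i.
    exfalso; move/eqP: nc; apply; apply/ffunP => i; rewrite ffunE.
    by move: (H i) => /negbFE/eqP.
  exists (inord (val i).+1); split.
    have hi : val i < m.+2 := ltn_ord i.
    rewrite QME vinord; slia.
  rewrite T1_at; have h1 : val (c i) < m.+3 := ltn_ord _.
  have h2 : val (c i) != m.+2.
    by apply: contra ci => /eqP e; apply/eqP/val_inj; rewrite e.
  rewrite ifT; slia.
- case: eqP => [_|nb]; first by rewrite setU1r //; case: (g3P HG p).
  rewrite setU1r //; apply: irr_inG HW _ (Hgen _ (T2_W p b)) _ _.
    move=> q0 h0; left; rewrite QME T2E h0 /f2 /=.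
    have : val p < m.+2 := ltn_ord p. slia.
  have [i bi] : exists i, b i.
    case: (pickP (fun i => b i)) => [i bi|H]; first by exists i.
    exfalso; apply: nb; apply/ffunP => i; rewrite ffunE; exact: H.
  exists (inord (val i).+1); split.
    have hi : val i < m.+2 := ltn_ord i.
    rewrite QME vinord; slia.
  rewrite T2_at bi; lia.
Qed.

Theorem mainTheorem8 (n : nat) (G : {set transf n}) :
  5 <= n -> generates_W6bf G ->
  (n - 2) ^ (n - 3) + (n - 3) * 2 ^ (n - 3) - 1 <= #|G|.
Proof.
case: n G => [|[|[|[|[|m]]]]] G // _ HG.
have e1 : #|[set: D m]| = #|F G @: [set: D m]|.
  by rewrite card_imset //; apply: F_inj.
have e2 : F G @: [set: D m] \subset T1 (c1 m) |: G.
  by apply/subsetP => t /imsetP[d _ ->]; apply: F_sub.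
have := subset_leq_card e2; rewrite -e1 cardsU1 cardsT /D card_sum card_ffun card_prod.
rewrite card_ffun !card_ord card_bool.
have -> : m.+4.+1 - 2 = m.+3 by [].
have -> : m.+4.+1 - 3 = m.+2 by [].
move: (m.+3 ^ m.+2 + m.+2 * 2 ^ m.+2) => a.
move: (T1 (c1 m) \notin G) #|G| => [] k /=; lia.
Qed.
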